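(* Let $\Sigma=(I,X,\mathcal U,\phi,Y,h)$ be a forward complete control system with outputs. Then $\Sigma$ is OUGS if and only if $\Sigma$ is OUGB and OULS.
   Context: Let $I\in\{\mathbb N_0,\mathbb R_0^+\}$. A forward complete control system with outputs $\Sigma=(I,X,\mathcal U,\phi,Y,h)$ consists of: a normed space $(X,\|\cdot\|_X)$; a vector space $U$ and a normed linear subspace $(\mathcal U,\|\cdot\|_{\mathcal U})$ of $\{u:I\to U\}$ such that for all $u\in\mathcal U,\tau\in I$, $u(\cdot+\tau)\in\mathcal U$ with $\|u(\cdot+\tau)\|_{\mathcal U}\le\|u\|_{\mathcal U}$, and for $t_2\ge t_1\ge 0$ the function $u|_{[t_1,t_2]}$ ($u$ on $[t_1,t_2]$, $0$ elsewhere) lies in $\mathcal U$ with norm $\le\|u\|_{\mathcal U}$; a map $\phi:I\times X\times\mathcal U\to X$ with $\phi(0,x,u)=x$, causality, and cocycle property $\phi(t+s,x,u)=\phi(s,\phi(t,x,u),u(t+\cdot))$; a normed space $Y$ and $h:X\times U\to Y$. Write $y(t,x,u)=h(\phi(t,x,u),u(t))$, $B_r=\{x:\|x\|_X<r\}$, $B_{r,\mathcal U}=\{u:\|u\|_{\mathcal U}<r\}$; $\mathcal K_\infty$ = unbounded continuous strictly increasing functions $\mathbb R_0^+\to\mathbb R_0^+$ vanishing at $0$. OUGS: $\exists\sigma,\gamma\in\mathcal K_\infty$ with $\|y(t,x,u)\|_Y\le\sigma(\|x\|_X)+\gamma(\|u\|_{\mathcal U})$ for all $x\in X,u\in\mathcal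 U,t\in I$. OULS: $\exists r>0,\sigma,\gamma\in\mathcal K_\infty$ with the same inequality for all $x\in B_r,u\in B_{r,\mathcal U},t\in I$. OUGB: $\exists\sigma,\gamma\in\mathcal K_\infty,c>0$ with $\|y(t,x,u)\|_Y\le\sigma(\|x\|_X)+\gamma(\|u\|_{\mathcal U})+c$ for all $x,u,t$. *)

(* Defs.v *)
From HB Require Import structures.
From mathcomp Require Import all_boot all_order all_algebra.
From mathcomp Require Import all_classical all_reals all_analysis.
Import Order.TTheory GRing.Theory Num.Theory.
Import numFieldNormedType.Exports.
Set Implicit Arguments. Unset Strict Implicit. Unset Printing Implicit Defensive.
Local Open Scope classical_set_scope.
Local Open Scope ring_scope.

(* Time set I: disc = true gives N_0 (embedded in R as {0,1,2,...}),
   disc = false gives R_0^+. *)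
Definition Iset (R : realType) (disc : bool) : set R :=
  if disc then [set t | exists n : nat, t = n%:R] else [set t | 0 <= t].
Arguments Iset : clear implicits.

Definition time (R : realType) (disc : bool) : Type := {t : R | Iset R disc t}.

Lemma Iset0 (R : realType) (disc : bool) : Iset R disc 0.
Proof. by case: disc => /=; [exists 0%N|]. Qed.

Lemma Iset_add (R : realType) (disc : bool) (s t : R) :
  Iset R disc s -> Iset R disc t -> Iset R disc (s + t).
Proof.
case: disc => /=; last exact: addr_ge0.
by move=> [m ->] [n ->]; exists (m + n)%N; rewrite natrD.
Qed.

Definition tzero (R : realType) (disc : bool) : time R disc :=
  exist _ 0 (Iset0 R disc).

Definition tadd (R : realType) (disc : bool) (s t : time R disc) : time R disc :=
  exist _ (sval s + sval t) (Iset_add (proj2_sig s) (proj2_sig t)).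

Definition restr (R : realType) (disc : bool) (U : lmodType R)
  (u : time R disc -> U) (t1 t2 : time R disc) : time R disc -> U :=
  fun s => if (sval t1 <= sval s <= sval t2) then u s else 0.

Definition Kinf (R : realType) (f : R -> R) : Prop :=
  [/\ f 0 = 0,
      {within [set x : R | 0 <= x], continuous f},
      (forall x y : R, 0 <= x -> x < y -> f x < f y) &
      (forall M : R, exists x : R, 0 <= x /\ M < f x)].

(* Forward complete control system (I, X, UU, phi, Y, h):
   UU : the set of admissible inputs (a linear subspace of {u : I -> U}),
   nU : its norm.  phi is only meaningful for u in UU. *)
Definition is_fc_control_system (R : realType) (disc : bool)
  (X : normedModType R) (U : lmodType R)
  (UU : set (time R disc -> U)) (nU : (time R disc -> U) -> R)
  (phi : time R disc -> X -> (time R disc -> U) -> X) : Prop :=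
  [/\ UU (fun _ => 0),
      (forall u v, UU u -> UU v -> UU (fun t => u t + v t)) &
      (forall (a : R) u, UU u -> UU (fun t => a *: u t))] /\
  [/\ (forall u, UU u -> (nU u = 0 <-> u = (fun _ => 0))),
      (forall u v, UU u -> UU v -> nU (fun t => u t + v t) <= nU u + nU v) &
      (forall (a : R) u, UU u -> nU (fun t => a *: u t) = `|a| * nU u)] /\
  (forall u (tau : time R disc), UU u ->
     UU (fun s => u (tadd s tau)) /\ nU (fun s => u (tadd s tau)) <= nU u) /\
  (forall u (t1 t2 : time R disc), UU u -> sval t1 <= sval t2 ->
     UU (restr u t1 t2) /\ nU (restr u t1 t2) <= nU u) /\
  (forall x u, UU u -> phi (tzero R disc) x u = x) /\
  (forall (t : time R disc) x u v, UU u -> UU v ->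
     (forall s : time R disc, sval s <= sval t -> u s = v s) ->
     forall s : time R disc, sval s <= sval t -> phi s x u = phi s x v) /\
  (forall (t s : time R disc) x u, UU u ->
     phi (tadd t s) x u = phi s (phi t x u) (fun r => u (tadd r t))).

Definition outp (R : realType) (disc : bool) (X : normedModType R) (U : lmodType R)
  (Y : normedModType R)
  (phi : time R disc -> X -> (time R disc -> U) -> X) (h : X -> U -> Y)
  (t : time R disc) (x : X) (u : time R disc -> U) : Y :=
  h (phi t x u) (u t).

Definition OUGS (R : realType) (disc : bool) (X : normedModType R) (U : lmodType R)
  (Y : normedModType R) (UU : set (time R disc -> U)) (nU : (time R disc -> U) -> R)
  (phi : time R disc -> X -> (time R disc -> U) -> X) (h : X -> U -> Y) : Prop :=
  exists sigma gamma : R -> R, Kinf sigma /\ Kinf gamma /\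
    forall (x : X) u (t : time R disc), UU u ->
      `|outp phi h t x u| <= sigma `|x| + gamma (nU u).

Definition OULS (R : realType) (disc : bool) (X : normedModType R) (U : lmodType R)
  (Y : normedModType R) (UU : set (time R disc -> U)) (nU : (time R disc -> U) -> R)
  (phi : time R disc -> X -> (time R disc -> U) -> X) (h : X -> U -> Y) : Prop :=
  exists r : R, 0 < r /\ exists sigma gamma : R -> R, Kinf sigma /\ Kinf gamma /\
    forall (x : X) u (t : time R disc), UU u -> `|x| < r -> nU u < r ->
      `|outp phi h t x u| <= sigma `|x| + gamma (nU u).

Definition OUGB (R : realType) (disc : bool) (X : normedModType R) (U : lmodType R)
  (Y : normedModType R) (UU : set (time R disc -> U)) (nU : (time R disc -> U) -> R)
  (phi : time R disc -> X -> (time R disc -> U) -> X) (h : X -> U -> Y) : Prop :=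
  exists (sigma gamma : R -> R) (c : R), Kinf sigma /\ Kinf gamma /\ 0 < c /\
    forall (x : X) u (t : time R disc), UU u ->
      `|outp phi h t x u| <= sigma `|x| + gamma (nU u) + c.

(* Main.v *)
From HB Require Import structures.
From mathcomp Require Import all_boot all_order all_algebra.
From mathcomp Require Import all_classical all_reals all_analysis.
From mathcomp Require Import lra.
Import Order.TTheory GRing.Theory Num.Theory.
Import numFieldNormedType.Exports.
Local Open Scope classical_set_scope.
Local Open Scope ring_scope.
Require Import Defs.

Lemma Kinf_ge0 (R : realType) (f : R -> R) x : Kinf f -> 0 <= x -> 0 <= f x.
Proof.
case=> f0 _ mf _; rewrite le_eqVlt => /orP[/eqP<-|x0]; first by rewrite f0.
by rewrite -f0 ltW // mf.
Qed.

Lemma Kinf_add (R : realType) (f g : R -> R) :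
  Kinf f -> Kinf g -> Kinf (fun s => f s + g s).
Proof.
move=> Kf Kg; case: (Kf) => f0 cf mf uf; case: (Kg) => g0 cg mg ug; split.
- by rewrite f0 g0 addr0.
- by move=> x; apply: continuousD; [exact: cf|exact: cg].
- by move=> x y x0 xy; apply: ltrD; [exact: mf|exact: mg].
- move=> M; have [x [x0 Mx]] := uf M; exists x; split => //.
  by rewrite -[M]addr0; apply: ltr_leD => //; exact: Kinf_ge0.
Qed.

Lemma Kinf_lin (R : realType) (k : R) : 0 < k -> Kinf (fun s => k * s).
Proof.
move=> k0; split.
- by rewrite mulr0.
- apply: continuous_subspaceT => x.
  exact: (@continuousZl_tmp R R^o R^o id k x (@cvg_id _ _)).
- by move=> x y _ xy; rewrite ltr_pM2l.
- move=> M; exists ((`|M| + 1) / k); split; first by apply: divr_ge0; [apply: addr_ge0 | apply: ltW].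
  rewrite mulrC divfK ?gt_eqF //.
  by apply: le_lt_trans (ler_norm M) _; rewrite ltrDl.
Qed.

Lemma arA (R : realType) (a b c d y k1 k2 cc : R) : 0 <= b -> 0 <= d -> 0 <= k2 ->
  y <= a + c + cc -> cc <= k1 -> y <= a + b + k1 + (c + d + k2).
Proof. move=> *; lra. Qed.
Lemma arB (R : realType) (a b c d y k1 k2 cc : R) : 0 <= b -> 0 <= d -> 0 <= k1 ->
  y <= a + c + cc -> cc <= k2 -> y <= a + b + k1 + (c + d + k2).
Proof. move=> *; lra. Qed.
Lemma arC (R : realType) (a b c d y k1 k2 : R) : 0 <= a -> 0 <= c -> 0 <= k1 -> 0 <= k2 ->
  y <= b + d -> y <= a + b + k1 + (c + d + k2).
Proof. move=> *; lra. Qed.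

Theorem lemma8 (R : realType) (disc : bool)
  (X : normedModType R) (U : lmodType R) (Y : normedModType R)
  (UU : set (time R disc -> U)) (nU : (time R disc -> U) -> R)
  (phi : time R disc -> X -> (time R disc -> U) -> X) (h : X -> U -> Y) :
  is_fc_control_system UU nU phi ->
  (OUGS UU nU phi h <-> OUGB UU nU phi h /\ OULS UU nU phi h).
Proof.
move=> [[U0 UD UZ] [[N0 ND NZ] _]].
have nU_ge0 : forall u, UU u -> 0 <= nU u.
  move=> u Uu.
  have Um : UU (fun t => (-1) *: u t) by exact: UZ.
  have e : (fun t => u t + (-1) *: u t) = (fun _ => 0).
    by apply/funext => t; rewrite scaleN1r subrr.
  have := ND _ _ Uu Um; rewrite e (proj2 (N0 _ U0) erefl) NZ // normrN normr1 mul1r.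
  move=> H; lra.
split.
- case=> s [g [Ks [Kg H]]]; split.
  + exists s, g, 1; do 3 split => //; move=> x u t Uu.
    by apply: le_trans (H _ _ _ Uu) _; rewrite lerDl.
  + exists 1; split => //; exists s, g; do 2 split=> //; move=> x u t Uu _ _; exact: H.
- case=> [[s [g [c [Ks [Kg [c0 H]]]]]] [r [r0 [sl [gl [Ksl [Kgl HL]]]]]]].
  have k0 : 0 < c / r by rewrite divr_gt0.
  exists (fun a => s a + sl a + c / r * a), (fun a => g a + gl a + c / r * a).
  split; first by apply: Kinf_add; [exact: Kinf_add|exact: Kinf_lin].
  split; first by apply: Kinf_add; [exact: Kinf_add|exact: Kinf_lin].
  move=> x u t Uu.
  have nx := normr_ge0 x; have nu := nU_ge0 _ Uu.
  have s1 := @Kinf_ge0 _ _ _ Ks nx; have s2 := @Kinf_ge0 _ _ _ Ksl nx.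
  have g1 := @Kinf_ge0 _ _ _ Kg nu; have g2 := @Kinf_ge0 _ _ _ Kgl nu.
  have kx : 0 <= c / r * `|x| by rewrite mulr_ge0 // ltW.
  have ku : 0 <= c / r * nU u by rewrite mulr_ge0 // ltW.
  have cb : forall a, r <= a -> c <= c / r * a.
    by move=> a ra; rewrite mulrAC ler_pdivlMr // ler_pM2l.
  have HG := H x u t Uu.
  case: (ltP `|x| r) => xr; last first.
    exact: arA HG (cb _ xr).
  case: (ltP (nU u) r) => ur; last first.
    exact: arB HG (cb _ ur).
  exact: arC (HL x u t Uu xr ur).
Qed.
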